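(* Let $\eta>0$, $\omega\in(0,1)$, $S\ge2$ an integer, and $x\in\mathbb R^d$. Let $C(x)$ denote the number of bits used by the ANQ (with bias $\eta$, compression rate $\omega$, and constellation of $S+1$ symbols) to quantize $x$ componentwise and encode the $d$ resulting indices. Then: (i) for the deterministic ANQ, $$C(x)\le3d\log_2(S+1)+d\log_2(S+1)\log_S\Big(2+\frac{\ln(1-\omega)+\ln\big(1+\frac{\omega\|x\|_2}{\sqrt d\,\eta}\big)}{\ln(1+\omega)-\ln(1-\omega)}\Big);$$ (ii) for the probabilistic ANQ, almost surely, $$C(x)\le3d\log_2(S+1)+d\log_2(S+1)\log_S\Big(2+\frac{\ln\big(1+\frac{\omega\|x\|_2}{\sqrt d\,\eta}\big)}{2\ln\big(\sqrt{1+\omega^2}+\omega\big)}\Big).$$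
   Context: ANQ (Adaptive encoding Non-uniform Quantizer) with parameters $\eta>0$, $\omega\in(0,1)$, applied componentwise to vectors in $\mathbb R^d$. Deterministic ANQ: scalar points $q_\ell=-q_{-\ell}=\frac{\eta}{\omega}[(\frac{1+\omega}{1-\omega})^\ell-1]$ ($\ell\ge0$); a scalar $x$ is mapped to index $\ell(x)=\mathrm{sign}(x)\lceil\frac{\ln(1-\omega)+\ln(1+\omega|x|/\eta)}{\ln(1+\omega)-\ln(1-\omega)}\rceil$ and value $q_{\ell(x)}$. Probabilistic ANQ: scalar points $q_\ell=-q_{-\ell}=\frac{\eta}{\omega}[(\sqrt{1+\omega^2}+\omega)^{2\ell}-1]$ ($\ell\ge0$); for $x\ge0$ let $\ell=\lceil\frac{\ln(1+\omega x/\eta)}{2\ln(\sqrt{1+\omega^2}+\omega)}\rceil$ and output index $\ell-1$ with probability $\frac{q_\ell-x}{q_\ell-q_{\ell-1}}$, index $\ell$ with probability $\frac{x-q_{\ell-1}}{q_\ell-q_{\ell-1}}$ (index $0$ for $x=0$); for $x<0$ use the negated index of $-x$. Encoding: symbols from $\{0,1,\dots,S\}$, each costing $\log_2(S+1)$ bits. Let $\tilde{\mathcal L}_{-1}=\emptyset$ and for $b\ge0$, $\tilde{\mathcal L}_b=\{-\lceil\frac{S^{b+1}-1}{2(S-1)}\rceil+1,\dots,\lfloor\frac{S^{b+1}-1}{2(S-1)}\rfloor\}$, $\mathcal L_b=\tilde{\mathcal L}_b\setminus\tilde{\mathcal L}_{b-1}$ (these partition $\mathbb Z$ and $|\mathcal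 L_b|=S^b$). An index $\ell\in\mathcal L_b$ is encoded by a unique string of $b$ symbols from $\{1,\dots,S\}$ followed by the symbol $0$, i.e., with $(b+1)\log_2(S+1)$ bits. The cost $C(x)$ of a vector is the sum of the costs of its $d$ component indices. *)

(* Defs.v *)
From Stdlib Require Import Reals ZArith List.
Open Scope R_scope.

Definition Rfloor (y : R) : Z := (up y - 1)%Z.        (* largest integer <= y *)
Definition Rceil (y : R) : Z := (- Rfloor (- y))%Z.

Definition log2 (y : R) : R := ln y / ln 2.
Definition logb (b y : R) : R := ln y / ln b.

Definition sumd (d : nat) (f : nat -> R) : R :=
  fold_right Rplus 0 (map f (seq 0 d)).

Definition norm2 (d : nat) (x : nat -> R) : R := sqrt (sumd d (fun i => x i ^ 2)).

Definition sgnZ (x : R) : Z :=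
  match Rlt_dec 0 x with
  | left _ => 1%Z
  | right _ => match Rlt_dec x 0 with left _ => (-1)%Z | right _ => 0%Z end
  end.

Definition det_index (eta w x : R) : Z :=
  (sgnZ x * Rceil ((ln (1 - w) + ln (1 + w * Rabs x / eta)) /
                   (ln (1 + w) - ln (1 - w))))%Z.

Definition pq (eta w : R) (l : nat) : R :=
  eta / w * ((sqrt (1 + w ^ 2) + w) ^ (2 * l) - 1).

Definition prob_level (eta w a : R) : Z :=
  Rceil (ln (1 + w * a / eta) / (2 * ln (sqrt (1 + w ^ 2) + w))).

Definition prob_pos (eta w a : R) (k : Z) : R :=
  if Req_EM_T a 0 then (if Z.eq_dec k 0 then 1 else 0)
  else
    let l := prob_level eta w a in
    let ql := pq eta w (Z.to_nat l) in
    let ql1 := pq eta w (Z.to_nat (l - 1)) in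
    if Z.eq_dec k (l - 1) then (ql - a) / (ql - ql1)
    else if Z.eq_dec k l then (a - ql1) / (ql - ql1)
    else 0.

(* probability that the probabilistic ANQ maps the scalar x to index k *)
Definition prob_index (eta w x : R) (k : Z) : R :=
  if Rlt_dec x 0 then prob_pos eta w (- x) (- k) else prob_pos eta w x k.

Definition in_Ltilde (S : Z) (b : nat) (l : Z) : bool :=
  let N := (S ^ (Z.of_nat b + 1) - 1)%Z in
  let D := (2 * (S - 1))%Z in
  let fl := (N / D)%Z in
  let cl := (- ((- N) / D))%Z in
  Z.leb (- cl + 1) l && Z.leb l fl.

Fixpoint level_aux (S : Z) (fuel b : nat) (l : Z) : nat :=
  match fuel with
  | O => b
  | Datatypes.S f => if in_Ltilde S b l then b else level_aux S f (Datatypes.S b) l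
  end.

(* the unique b with l \in L_b, i.e. the least b with l \in tilde L_b
   (the search bound 2|l|+1 suffices for S >= 2) *)
Definition level (S : Z) (l : Z) : nat :=
  level_aux S (Datatypes.S (Z.to_nat (2 * Z.abs l))) 0 l.

Definition index_cost (S : Z) (l : Z) : R :=
  INR (Datatypes.S (level S l)) * log2 (IZR S + 1).

Definition vec_cost (S : Z) (d : nat) (ks : nat -> Z) : R :=
  sumd d (fun i => index_cost S (ks i)).

Definition det_cost (eta w : R) (S : Z) (d : nat) (x : nat -> R) : R :=
  vec_cost S d (fun i => det_index eta w (x i)).

(* Main.v *)
Require Import Defs.
From Stdlib Require Import Reals ZArith List Lia Lra.
Open Scope R_scope.

Fixpoint sr (d : nat) (f : nat -> R) : R :=
  match d with O => 0 | Datatypes.S d => sr d f + f d end.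

Lemma fold_plus_acc (l : list R) a : fold_right Rplus a l = fold_right Rplus 0 l + a.
Proof. induction l; simpl; [lra| rewrite IHl; lra]. Qed.

Lemma sumd_sr d f : sumd d f = sr d f.
Proof.
  induction d; [reflexivity|].
  unfold sumd in *. rewrite seq_S, map_app, fold_right_app. simpl.
  rewrite fold_plus_acc, IHd. lra.
Qed.

Lemma sr_le d f g : (forall i, (i < d)%nat -> f i <= g i) -> sr d f <= sr d g.
Proof. induction d; simpl; intros H; [lra|].
  assert (f d <= g d) by (apply H; lia). assert (sr d f <= sr d g) by (apply IHd; intros; apply H; lia). lra. Qed.

Lemma ln_le_lin z Z : 0 < z -> 0 < Z -> ln z <= ln Z + z / Z - 1.
Proof. intros. assert (ln (z/Z) <= z/Z - 1).
  { pose proof (exp_ineq1_le (ln (z/Z))). rewrite exp_ln in H1. lra. apply Rdiv_lt_0_compat; lra. }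
  unfold Rdiv in H1. rewrite ln_mult, ln_Rinv in H1 by (try apply Rinv_0_lt_compat; lra). lra. Qed.

Lemma sr_lin d (f : nat -> R) a b : sr d (fun i => a + b * f i) = INR d * a + b * sr d f.
Proof. induction d; [simpl; lra|]. cbn [sr]. rewrite IHd, S_INR. ring. Qed.

Lemma lemG d z Z : (forall i, (i < d)%nat -> 0 < z i) -> 0 < Z -> sr d z <= INR d * Z ->
  sr d (fun i => ln (z i)) <= INR d * ln Z.
Proof. intros Hz HZ Hs.
  apply Rle_trans with (sr d (fun i => (ln Z - 1) + / Z * z i)).
  apply sr_le. intros i Hi. pose proof (ln_le_lin (z i) Z (Hz i Hi) HZ). unfold Rdiv in H. lra.
  rewrite sr_lin. assert (/Z * sr d z <= INR d).
  { apply Rmult_le_reg_l with Z; auto. rewrite <- Rmult_assoc, Rinv_r by lra. lra. }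
  lra. Qed.

Lemma sr_sq d f m : sr d (fun i => (f i - m)^2) = sr d (fun i => f i ^ 2) - 2 * m * sr d f + INR d * m^2.
Proof. induction d; [simpl; lra|]. cbn [sr]. rewrite IHd, S_INR. ring. Qed.

Lemma sr_nonneg d f : (forall i, (i<d)%nat -> 0 <= f i) -> 0 <= sr d f.
Proof. intros. apply Rle_trans with (sr d (fun _ => 0)).
  clear H; induction d; simpl; lra. apply sr_le; auto. Qed.

Lemma lemCS d x : (0 < d)%nat ->
  sr d (fun i => Rabs (x i)) <= INR d * (norm2 d x / sqrt (INR d)).
Proof. intros Hd. unfold norm2. rewrite sumd_sr.
  set (s := sr d (fun i => Rabs (x i))).
  set (Q := sr d (fun i => x i ^ 2)).
  assert (HdR : 0 < INR d) by (apply lt_0_INR; auto).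
  assert (Hs : 0 <= s) by (apply sr_nonneg; intros; apply Rabs_pos).
  assert (HQ : 0 <= Q) by (apply sr_nonneg; intros; apply pow2_ge_0).
  assert (H0 := sr_nonneg d (fun i => (Rabs (x i) - s / INR d)^2) (fun i _ => pow2_ge_0 _)).
  rewrite sr_sq in H0.
  assert (EQ : sr d (fun i => Rabs (x i) ^ 2) = Q) by (unfold Q; clear; induction d; [simpl; lra| cbn [sr]; rewrite IHd, pow2_abs; lra]).
  rewrite EQ in H0. fold s in H0.
  assert (s * s <= INR d * Q).
  { assert (Q - 2 * (s / INR d) * s + INR d * (s / INR d) ^ 2 = (INR d * Q - s*s)/ INR d) by (field; lra).
    rewrite H in H0. apply Rmult_le_reg_r with (/ INR d). apply Rinv_0_lt_compat; lra.
    unfold Rdiv in H0. nra. }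
  assert (Hsd := sqrt_lt_R0 _ HdR).
  assert (INR d * (sqrt Q / sqrt (INR d)) = sqrt (INR d * Q)).
  { rewrite sqrt_mult by lra. rewrite <- (sqrt_sqrt (INR d)) at 1 by lra. field. lra. }
  rewrite H1.
  rewrite <- (sqrt_square s) by lra. apply sqrt_le_1; nra.
Qed.

Lemma ln_le x y : 0 < x -> x <= y -> ln x <= ln y.
Proof. intros H1 H2. destruct H2 as [H2|H2]. left; apply ln_increasing; auto. subst; lra. Qed.

Lemma Rdiv_le_0_compat a b : 0 <= a -> 0 < b -> 0 <= a / b.
Proof. intros. unfold Rdiv. apply Rmult_le_pos; auto. left; apply Rinv_0_lt_compat; auto. Qed.

Lemma Rceil_ge y : y <= IZR (Rceil y).
Proof. unfold Rceil, Rfloor. rewrite opp_IZR, minus_IZR. destruct (archimed (-y)). lra. Qed.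
Lemma Rceil_lt y : IZR (Rceil y) < y + 1.
Proof. unfold Rceil, Rfloor. rewrite opp_IZR, minus_IZR. destruct (archimed (-y)). lra. Qed.

Lemma level_aux_le S fuel b0 b l : (b0 <= b)%nat -> in_Ltilde S b l = true -> (level_aux S fuel b0 l <= b)%nat.
Proof. revert b0; induction fuel; intros b0 Hb Hin; simpl; auto.
  destruct (in_Ltilde S b0 l) eqn:E; auto.
  apply IHfuel; auto. destruct (Nat.eq_dec b0 b); [subst; congruence| lia]. Qed.

Lemma in_Lt S j l : (2 <= S)%Z -> (Z.abs l + 1 <= S ^ Z.of_nat j)%Z -> in_Ltilde S (Datatypes.S j) l = true.
Proof. intros HS H. unfold in_Ltilde.
  replace (Z.of_nat (Datatypes.S j) + 1)%Z with (Z.of_nat j + 2)%Z by lia.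
  rewrite Z.pow_add_r by lia. set (P := (S ^ Z.of_nat j)%Z) in *.
  assert (Hup : (Z.abs l + 1 <= (P * S ^ 2 - 1) / (2 * (S - 1)))%Z).
  { apply Z.div_le_lower_bound. lia. nia. }
  assert (Hlo : ((- (P * S ^ 2 - 1)) / (2 * (S - 1)) <= - Z.abs l - 1)%Z).
  { apply Z.div_le_upper_bound. lia. nia. }
  apply andb_true_intro; split; apply Z.leb_le; lia. Qed.

Lemma exj_aux S n k : (2 <= S)%Z -> (n + 1 <= S ^ Z.of_nat k)%Z ->
  exists j : nat, (n + 1 <= S ^ Z.of_nat j)%Z /\ (j = 0%nat \/ (S ^ Z.of_nat (j - 1) < n + 1)%Z).
Proof. intros HS. induction k; intros H.
  - exists 0%nat. auto.
  - destruct (Z_le_gt_dec (n+1) (S ^ Z.of_nat k)) as [H1|H1]; auto.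
    exists (Datatypes.S k). split; auto. right. replace (Datatypes.S k - 1)%nat with k by lia. lia. Qed.

Lemma pow_big S k : (2 <= S)%Z -> (Z.of_nat k + 1 <= S ^ Z.of_nat k)%Z.
Proof. intros HS. induction k. simpl. lia.
  rewrite Nat2Z.inj_succ, Z.pow_succ_r by lia. nia. Qed.

Lemma comp_bound S l y : (2 <= S)%Z -> IZR (Z.abs l) + 1 <= y ->
  index_cost S l <= (3 + ln y / ln (IZR S)) * log2 (IZR S + 1).
Proof. intros HS Hy.
  assert (HSr : 2 <= IZR S) by (apply IZR_le; auto).
  assert (HlS : 0 < ln (IZR S)) by (rewrite <- ln_1; apply ln_increasing; lra).
  assert (HL : 0 < log2 (IZR S + 1)).
  { unfold log2. apply Rdiv_lt_0_compat; rewrite <- ln_1; apply ln_increasing; lra. }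
  destruct (exj_aux S (Z.abs l) (Z.to_nat (Z.abs l)) HS) as [j [Hj1 Hj2]].
  { pose proof (pow_big S (Z.to_nat (Z.abs l)) HS) as Hp. rewrite Z2Nat.id in Hp by lia. rewrite Z2Nat.id by lia. exact Hp. }
  assert (Hlev : (level S l <= Datatypes.S j)%nat).
  { apply level_aux_le. lia. apply in_Lt; auto. }
  unfold index_cost. apply Rmult_le_compat_r. lra.
  apply Rle_trans with (INR (Datatypes.S (Datatypes.S j))). apply le_INR; lia.
  rewrite !S_INR.
  assert (Hy1 : 1 <= y) by (assert (0 <= IZR (Z.abs l)) by (apply IZR_le; lia); lra).
  assert (0 <= ln y) by (rewrite <- ln_1; apply ln_le; lra).
  destruct j as [|j].
  { simpl. assert (0 <= ln y / ln (IZR S)) by (apply Rdiv_le_0_compat; lra). lra. }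
  destruct Hj2 as [Hj2|Hj2]; [discriminate|].
  replace (Datatypes.S j - 1)%nat with j in Hj2 by lia.
  - apply IZR_lt in Hj2. rewrite <- pow_IZR, plus_IZR in Hj2.
    assert (H0 : ln (IZR S ^ j) < ln y).
    { apply ln_increasing. apply pow_lt; lra. eapply Rlt_le_trans; [exact Hj2| exact Hy]. }
    rewrite (ln_pow (IZR S)) in H0 by (apply (Rlt_le_trans 0 2); [lra|exact HSr]). 
    assert (INR j < ln y / ln (IZR S)).
    { apply Rmult_lt_reg_r with (ln (IZR S)); auto. unfold Rdiv. rewrite Rmult_assoc, Rinv_l by lra. lra. }
    rewrite S_INR. lra.
Qed.

Lemma assemble S d (cst : nat -> R) (x : nat -> R) c a b :
  (2 <= S)%Z -> (0 < d)%nat -> 0 < c -> 0 < a -> 0 < b ->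
  (forall i, (i < d)%nat -> cst i <= (3 + ln (c + a * ln (1 + b * Rabs (x i))) / ln (IZR S)) * log2 (IZR S + 1)) ->
  sumd d cst <= 3 * INR d * log2 (IZR S + 1) + INR d * log2 (IZR S + 1) *
     (ln (c + a * ln (1 + b * (norm2 d x / sqrt (INR d)))) / ln (IZR S)).
Proof. intros HS Hd Hc Ha Hb H.
  assert (HSr : 2 <= IZR S) by (apply IZR_le; auto).
  assert (HlS : 0 < ln (IZR S)) by (rewrite <- ln_1; apply ln_increasing; lra).
  assert (HL : 0 < log2 (IZR S + 1)).
  { unfold log2. apply Rdiv_lt_0_compat; rewrite <- ln_1; apply ln_increasing; lra. }
  set (L := log2 (IZR S + 1)) in *.
  set (T := norm2 d x / sqrt (INR d)).
  assert (HT : 0 <= T).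
  { unfold T, norm2. apply Rdiv_le_0_compat. apply sqrt_pos. apply sqrt_lt_R0, lt_0_INR; auto. }
  assert (ln0 : forall u, 0 <= u -> 0 <= ln (1 + b * u)).
  { intros u Hu. rewrite <- ln_1. apply ln_le. lra. nra. }
  assert (S1 : sr d (fun i => ln (1 + b * Rabs (x i))) <= INR d * ln (1 + b * T)).
  { apply lemG. intros; pose proof (Rabs_pos (x i)); nra. nra.
    rewrite sr_lin. pose proof (lemCS d x Hd). fold T in H0. nra. }
  assert (S2 : sr d (fun i => ln (c + a * ln (1 + b * Rabs (x i)))) <= INR d * ln (c + a * ln (1 + b * T))).
  { apply lemG. intros i _. pose proof (ln0 _ (Rabs_pos (x i))). nra.
    pose proof (ln0 _ HT). nra.
    rewrite sr_lin. nra. }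
  rewrite sumd_sr. apply Rle_trans with (sr d (fun i => 3 * L + (L / ln (IZR S)) * ln (c + a * ln (1 + b * Rabs (x i))))).
  apply sr_le. intros i Hi. apply Rle_trans with (1 := H i Hi). right. field. lra.
  rewrite sr_lin.
  assert (0 <= L / ln (IZR S)) by (apply Rdiv_le_0_compat; lra).
  assert (L / ln (IZR S) * sr d (fun i => ln (c + a * ln (1 + b * Rabs (x i)))) <= L / ln (IZR S) * (INR d * ln (c + a * ln (1 + b * T)))) by (apply Rmult_le_compat_l; auto).
  apply Rle_trans with (INR d * (3 * L) + L / ln (IZR S) * (INR d * ln (c + a * ln (1 + b * T)))). lra.
  right. field. lra.
Qed.

Lemma det_comp eta w xi : 0 < eta -> 0 < w -> w < 1 ->
  IZR (Z.abs (det_index eta w xi)) + 1 <=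
  (2 + ln (1 - w) / (ln (1 + w) - ln (1 - w))) + / (ln (1 + w) - ln (1 - w)) * ln (1 + w / eta * Rabs xi).
Proof. intros He Hw0 Hw1.
  set (D := ln (1 + w) - ln (1 - w)).
  assert (HD : 0 < D) by (unfold D; assert (ln (1-w) < ln (1+w)) by (apply ln_increasing; lra); lra).
  assert (Hc : ln (1 - w) / D + 1 > 0).
  { replace (ln (1 - w) / D + 1) with (ln (1+w) / D) by (unfold D; field; fold D; lra).
    apply Rdiv_lt_0_compat; auto. rewrite <- ln_1; apply ln_increasing; lra. }
  assert (Hg : 0 <= ln (1 + w / eta * Rabs xi)).
  { rewrite <- ln_1. apply ln_le. lra. pose proof (Rabs_pos xi).
    assert (0 <= w / eta) by (apply Rdiv_le_0_compat; lra). nra. }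
  assert (Ha : 0 <= / D * ln (1 + w / eta * Rabs xi)) by (apply Rmult_le_pos; auto; left; apply Rinv_0_lt_compat; auto).
  unfold det_index, sgnZ. fold D.
  set (A := (ln (1 - w) + ln (1 + w * Rabs xi / eta)) / D).
  assert (EA : A = ln (1 - w) / D + / D * ln (1 + w / eta * Rabs xi)).
  { unfold A. replace (w * Rabs xi / eta) with (w / eta * Rabs xi) by (field; lra). field. lra. }
  assert (H1 := Rceil_ge A). assert (H2 := Rceil_lt A).
  assert (Hpos : (-1 < Rceil A)%Z) by (apply lt_IZR; lra).
  destruct (Rlt_dec 0 xi); [|destruct (Rlt_dec xi 0)].
  - replace (Z.abs (1 * Rceil A)) with (Rceil A) by lia. lra.
  - replace (Z.abs (-1 * Rceil A)) with (Rceil A) by lia. lra.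
  - replace (Z.abs (0 * Rceil A)) with 0%Z by lia. simpl. lra.
Qed.

Lemma prob_pos_comp eta w a k : 0 < eta -> 0 < w -> 0 <= a -> 0 < prob_pos eta w a k ->
  IZR (Z.abs k) + 1 <= 2 + / (2 * ln (sqrt (1 + w ^ 2) + w)) * ln (1 + w / eta * a).
Proof. intros He Hw Ha Hp.
  assert (Hq : 0 < ln (sqrt (1 + w ^ 2) + w)).
  { rewrite <- ln_1. apply ln_increasing. lra.
    assert (1 <= sqrt (1 + w^2)). { apply Rle_trans with (sqrt 1); [rewrite sqrt_1; lra| apply sqrt_le_1_alt; nra]. } lra. }
  assert (Hb : 0 <= w / eta * a) by (apply Rmult_le_pos; auto; apply Rdiv_le_0_compat; lra).
  assert (Hg : 0 <= ln (1 + w / eta * a)) by (rewrite <- ln_1; apply ln_le; lra).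
  assert (Hi : 0 < / (2 * ln (sqrt (1 + w ^ 2) + w))) by (apply Rinv_0_lt_compat; lra).
  unfold prob_pos in Hp. destruct (Req_EM_T a 0) as [Ea|Ea].
  - destruct (Z.eq_dec k 0) as [->|]; [|lra]. replace (IZR (Z.abs 0)) with 0 by reflexivity. pose proof (Rmult_le_pos _ _ (Rlt_le _ _ Hi) Hg). lra.
  - cbv zeta in Hp. unfold prob_level in Hp.
    set (P := ln (1 + w * a / eta) / (2 * ln (sqrt (1 + w ^ 2) + w))) in Hp.
    assert (EP : P = / (2 * ln (sqrt (1 + w ^ 2) + w)) * ln (1 + w / eta * a)).
    { unfold P. replace (w * a / eta) with (w / eta * a) by (field; lra). field. lra. }
    assert (HP : 0 < P).
    { unfold P. apply Rdiv_lt_0_compat; [|lra]. rewrite <- ln_1; apply ln_increasing. lra.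
      assert (0 < w * a / eta). { unfold Rdiv. apply Rmult_lt_0_compat; [|apply Rinv_0_lt_compat; lra]. apply Rmult_lt_0_compat; lra. } lra. }
    assert (H1 := Rceil_ge P). assert (H2 := Rceil_lt P).
    assert (Hl : (0 < Rceil P)%Z) by (apply lt_IZR; lra).
    destruct (Z.eq_dec k (Rceil P - 1)) as [->|].
    + replace (Z.abs (Rceil P - 1)) with (Rceil P - 1)%Z by lia. rewrite minus_IZR. lra.
    + destruct (Z.eq_dec k (Rceil P)) as [->|]; [|lra].
      replace (Z.abs (Rceil P)) with (Rceil P) by lia. lra.
Qed.

Lemma prob_comp eta w xi k : 0 < eta -> 0 < w -> 0 < prob_index eta w xi k ->
  IZR (Z.abs k) + 1 <= 2 + / (2 * ln (sqrt (1 + w ^ 2) + w)) * ln (1 + w / eta * Rabs xi).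
Proof. intros He Hw Hp. unfold prob_index in Hp. destruct (Rlt_dec xi 0).
  - rewrite Rabs_left by auto. replace (Z.abs k) with (Z.abs (- k)) by lia.
    apply prob_pos_comp; auto; lra.
  - rewrite Rabs_right by lra. apply prob_pos_comp; auto; lra.
Qed.


Theorem lemma3 (eta w : R) (S : Z) (d : nat) (x : nat -> R)
  (Heta : 0 < eta) (Hw0 : 0 < w) (Hw1 : w < 1) (HS : (2 <= S)%Z) (Hd : (0 < d)%nat) :
  (* (i) deterministic ANQ *)
  det_cost eta w S d x <=
    3 * INR d * log2 (IZR S + 1)
    + INR d * log2 (IZR S + 1) *
      logb (IZR S) (2 + (ln (1 - w) + ln (1 + w * norm2 d x / (sqrt (INR d) * eta)))
                         / (ln (1 + w) - ln (1 - w)))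
  /\
  (* (ii) probabilistic ANQ, almost surely: for every index vector that occurs with
     positive probability in each component *)
  (forall ks : nat -> Z,
     (forall i, (i < d)%nat -> 0 < prob_index eta w (x i) (ks i)) ->
     vec_cost S d ks <=
       3 * INR d * log2 (IZR S + 1)
       + INR d * log2 (IZR S + 1) *
         logb (IZR S) (2 + ln (1 + w * norm2 d x / (sqrt (INR d) * eta))
                            / (2 * ln (sqrt (1 + w ^ 2) + w)))).
Proof.
  assert (Hsd : 0 < sqrt (INR d)) by (apply sqrt_lt_R0, lt_0_INR; auto).
  assert (Eb : w * norm2 d x / (sqrt (INR d) * eta) = w / eta * (norm2 d x / sqrt (INR d))) by (field; lra).
  rewrite Eb. split.
  - set (D := ln (1 + w) - ln (1 - w)).
    assert (HD : 0 < D) by (unfold D; assert (ln (1-w) < ln (1+w)) by (apply ln_increasing; lra); lra).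
    assert (Hc : ln (1 - w) / D + 1 > 0).
    { replace (ln (1 - w) / D + 1) with (ln (1+w) / D) by (unfold D; field; fold D; lra).
      apply Rdiv_lt_0_compat; auto. rewrite <- ln_1; apply ln_increasing; lra. }
    replace (logb (IZR S) (2 + (ln (1 - w) + ln (1 + w / eta * (norm2 d x / sqrt (INR d)))) / D))
      with (ln ((2 + ln (1 - w) / D) + / D * ln (1 + w / eta * (norm2 d x / sqrt (INR d)))) / ln (IZR S)).
    2:{ unfold logb. f_equal. f_equal. field. lra. }
    unfold det_cost, vec_cost. apply assemble; auto.
    + lra.
    + apply Rinv_0_lt_compat; auto.
    + apply Rdiv_lt_0_compat; auto.
    + intros i _. apply comp_bound; auto. apply det_comp; auto.
  - intros ks Hks.
    assert (Hq : 0 < ln (sqrt (1 + w ^ 2) + w)).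
    { rewrite <- ln_1. apply ln_increasing. lra.
      assert (1 <= sqrt (1 + w^2)). { apply Rle_trans with (sqrt 1); [rewrite sqrt_1; lra| apply sqrt_le_1_alt; nra]. } lra. }
    replace (logb (IZR S) (2 + ln (1 + w / eta * (norm2 d x / sqrt (INR d))) / (2 * ln (sqrt (1 + w ^ 2) + w))))
      with (ln (2 + / (2 * ln (sqrt (1 + w ^ 2) + w)) * ln (1 + w / eta * (norm2 d x / sqrt (INR d)))) / ln (IZR S)).
    2:{ unfold logb. f_equal. f_equal. field. lra. }
    unfold vec_cost. apply assemble; auto.
    + lra.
    + apply Rinv_0_lt_compat; lra.
    + apply Rdiv_lt_0_compat; auto.
    + intros i Hi. apply comp_bound; auto. apply prob_comp; auto.
Qed.
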